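(* Let $(\Omega,\mathcal A)$ be a Borel space, $(\Omega,X_\bullet)$ a Borel field of proper metric spaces, and $(F^n_\bullet)_{n\ge1}$ a sequence of Borel subfields such that each $F^n_\omega$ is closed. Then the subfield $\bigcap_n F^n_\bullet$, defined by $\omega\mapsto\bigcap_{n\ge1}F^n_\omega$, is a Borel subfield.
   Context: Borel field of metric spaces: $(X_\omega,d_\omega)_{\omega\in\Omega}$ metric spaces; a section is $x_\bullet=(x_\omega)$, $x_\omega\in X_\omega$. A Borel structure is a set $\mathcal L(\Omega,X_\bullet)$ of sections such that (a) $\omega\mapsto d_\omega(x_\omega,y_\omega)$ is Borel for all $x_\bullet,y_\bullet\in\mathcal L$; (b) any section $y_\bullet$ with $\omega\mapsto d_\omega(x_\omega,y_\omega)$ Borel for all $x_\bullet\in\mathcal L$ lies in $\mathcal L$; (c) there is a countable $\mathcal D=\{x^n_\bullet\}\subseteq\mathcal L$ (fundamental family) with $\{x^n_\omega\}_n$ dense in $X_\omega$ for all $\omega$. For Borel $\Omega'$, $\mathcal L(\Omega',X_\bullet)$ = restrictions to $\Omega'$ of Borel sections. A subfield is $A_\bullet=(A_\omega)$ with $A_\omega\subseteq X_\omega$ (possibly empty); it is Borel if $\Omega'=\{\omega:A_\omega\ne\emptyset\}\in\mathcal A$ and there are countably many $y^n_\bullet\in\mathcal L(\Omega',X_\bullet)$ with $y^n_\omega\in A_\omega$ and $A_\omega\subseteq\overline{\{y^n_\omega\}_n}$ for all $\omega\in\Omega'$. Proper: closed balls are compact. *)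

(* Defs.v *)
From Stdlib Require Import Reals List.
Open Scope R_scope.

Definition set (T : Type) := T -> Prop.

Record sigma_algebra {T : Type} (A : set T -> Prop) : Prop := {
  sa_full  : A (fun _ => True);
  sa_compl : forall S, A S -> A (fun x => ~ S x);
  sa_union : forall S : nat -> set T, (forall n, A (S n)) -> A (fun x => exists n, S n x)
}.

Definition openR (U : set R) : Prop :=
  forall x, U x -> exists eps, 0 < eps /\ forall y, Rabs (y - x) < eps -> U y.

Definition borelR (B : set R) : Prop :=
  forall A : set R -> Prop, sigma_algebra A -> (forall U, openR U -> A U) -> A B.

Definition borel_fun {Omega : Type} (A : set Omega -> Prop) (f : Omega -> R) : Prop :=
  forall B, borelR B -> A (fun w => B (f w)).

Record is_metric {T : Type} (d : T -> T -> R) : Prop := {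
  met_zero : forall x y, d x y = 0 <-> x = y;
  met_sym  : forall x y, d x y = d y x;
  met_tri  : forall x y z, d x z <= d x y + d y z
}.

Definition m_open {T : Type} (d : T -> T -> R) (U : set T) : Prop :=
  forall x, U x -> exists eps, 0 < eps /\ forall y, d x y < eps -> U y.

Definition m_compact {T : Type} (d : T -> T -> R) (K : set T) : Prop :=
  forall (I : Type) (U : I -> set T),
    (forall i, m_open d (U i)) ->
    (forall x, K x -> exists i, U i x) ->
    exists l : list I, forall x, K x -> exists i, In i l /\ U i x.

Definition closed_ball {T : Type} (d : T -> T -> R) (x : T) (r : R) : set T :=
  fun y => d x y <= r.

Definition proper_metric {T : Type} (d : T -> T -> R) : Prop :=
  forall x r, m_compact d (closed_ball d x r).

Definition m_closure {T : Type} (d : T -> T -> R) (S : set T) : set T :=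
  fun x => forall eps, 0 < eps -> exists y, S y /\ d x y < eps.

Definition m_closed {T : Type} (d : T -> T -> R) (S : set T) : Prop :=
  forall x, m_closure d S x -> S x.

Record borel_field {Omega : Type} (A : set Omega -> Prop) (X : Omega -> Type)
    (d : forall w, X w -> X w -> R) (L : (forall w, X w) -> Prop) : Prop := {
  bf_metric : forall w, is_metric (d w);
  bf_a : forall x y, L x -> L y -> borel_fun A (fun w => d w (x w) (y w));
  bf_b : forall y : (forall w, X w),
           (forall x, L x -> borel_fun A (fun w => d w (x w) (y w))) -> L y;
  bf_c : exists D : nat -> (forall w, X w),
           (forall n, L (D n)) /\
           forall w (x : X w), m_closure (d w) (fun z => exists n, z = D n w) x
}.

(** Borel subfields. Sections in L(Omega', X) are restrictions to Omega' of
    sections in L, so we quantify over sections in L and only use their values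
    on Omega'. *)
Definition borel_subfield {Omega : Type} (A : set Omega -> Prop) (X : Omega -> Type)
    (d : forall w, X w -> X w -> R) (L : (forall w, X w) -> Prop)
    (F : forall w, set (X w)) : Prop :=
  A (fun w => exists x, F w x) /\
  exists y : nat -> (forall w, X w),
    (forall n, L (y n)) /\
    forall w, (exists x, F w x) ->
      (forall n, F w (y n w)) /\
      (forall x, F w x -> m_closure (d w) (fun z => exists n, z = y n w) x).

(* Main.v *)
Require Import Defs.
From Stdlib Require Import Reals Lra List Lia ZArith.
From Stdlib Require Import Classical ClassicalEpsilon FunctionalExtensionality PropExtensionality.
From Stdlib Require Cantor.
Open Scope R_scope.

Definition e (k : nat) : R := (/2) ^ k.

Lemma e_pos k : 0 < e k.
Proof. unfold e. apply pow_lt. lra. Qed.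

Lemma e_S k : e (S k) = e k / 2.
Proof. unfold e. simpl. lra. Qed.

Lemma e_mono k k' : (k <= k')%nat -> e k' <= e k.
Proof.
  intros H. induction H. lra. rewrite e_S. pose proof (e_pos m). lra.
Qed.

Lemma e_le1 k : e k <= 1.
Proof. replace 1 with (e 0) by reflexivity. apply e_mono; lia. Qed.

Lemma e_small eps : 0 < eps -> exists k, e k < eps.
Proof.
  intros H. destruct (pow_lt_1_zero (/2)) with (y := eps) as [N HN].
  rewrite Rabs_pos_eq; lra. exact H.
  exists N. specialize (HN N (le_n _)). rewrite Rabs_pos_eq in HN. exact HN.
  pose proof (e_pos N). unfold e in *. lra.
Qed.

Lemma Rabs_le_inv a b : Rabs a <= b -> -b <= a <= b.
Proof. unfold Rabs; destruct Rcase_abs; intros; lra. Qed.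

Section Meas.
Context {Omega : Type} (A : set Omega -> Prop) (HA : sigma_algebra A).

Lemma A_ext (S S' : set Omega) : A S -> (forall w, S w <-> S' w) -> A S'.
Proof.
  intros H E. replace S' with S; auto.
  apply functional_extensionality; intro w; apply propositional_extensionality; auto.
Qed.

Lemma A_full : A (fun _ => True).
Proof. apply (sa_full _ HA). Qed.

Lemma A_compl S : A S -> A (fun w => ~ S w).
Proof. apply (sa_compl _ HA). Qed.

Lemma A_union (S : nat -> set Omega) : (forall n, A (S n)) -> A (fun w => exists n, S n w).
Proof. apply (sa_union _ HA). Qed.

Lemma A_empty : A (fun _ => False).
Proof. eapply A_ext. apply A_compl, A_full. intros w; tauto. Qed.

Lemma A_inter (S : nat -> set Omega) : (forall n, A (S n)) -> A (fun w => forall n, S n w).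
Proof.
  intros H. eapply A_ext. apply A_compl, A_union. intros n. apply A_compl, H.
  intros w; split.
  - intros H1 n. apply NNPP. intros H2. apply H1. exists n. exact H2.
  - intros H1 [n H2]. auto.
Qed.

Lemma A_or S T : A S -> A T -> A (fun w => S w \/ T w).
Proof.
  intros H1 H2. eapply A_ext. apply (A_union (fun n => match n with O => S | _ => T end)).
  intros [|n]; auto.
  intros w; split. intros [[|n] Hn]; auto. intros [H|H]. exists O; auto. exists 1%nat; auto.
Qed.

Lemma A_and S T : A S -> A T -> A (fun w => S w /\ T w).
Proof.
  intros H1 H2. eapply A_ext. apply (A_inter (fun n => match n with O => S | _ => T end)).
  intros [|n]; auto.
  intros w; split. intros H; split; [apply (H O)|apply (H 1%nat)]. intros [H H'] [|n]; auto.
Qed.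

Lemma A_impl S T : A S -> A T -> A (fun w => S w -> T w).
Proof.
  intros H1 H2. eapply A_ext. apply A_or. apply A_compl, H1. exact H2.
  intros w. split. intros [H|H]; tauto. intros H. destruct (classic (S w)); auto.
Qed.

Lemma A_const (P : Prop) : A (fun _ => P).
Proof.
  destruct (classic P). eapply A_ext. apply A_full. intuition.
  eapply A_ext. apply A_empty. intuition.
Qed.

Lemma A_ball_lt (f : Omega -> R) : (forall a, A (fun w => f w < a)) ->
  forall (q r : R), A (fun w => Rabs (f w - q) < r).
Proof.
  intros H q r. eapply A_ext. apply A_and. apply (H (q + r)).
  apply (A_union (fun k w => ~ f w < q - r + e k)). intros k. apply A_compl, H.
  intros w; split.
  - intros [H1 [k H2]]. pose proof (e_pos k). apply Rabs_def1; lra.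
  - intros H1. apply Rabs_def2 in H1. split. lra.
    destruct (e_small (f w - (q - r))) as [k Hk]. lra. exists k. lra.
Qed.

Lemma dyadic_approx (x : R) (c : nat) : exists a b : nat,
  Rabs (x - (INR a - INR b) * e c) <= e c.
Proof.
  set (z := up (x / e c)). pose proof (archimed (x / e c)) as [H1 H2]. fold z in H1, H2.
  exists (Z.to_nat z), (Z.to_nat (- z)).
  assert (Hz : INR (Z.to_nat z) - INR (Z.to_nat (- z)) = IZR z).
  { destruct z; simpl. lra. rewrite INR_IPR. unfold IZR. ring. rewrite INR_IPR. unfold IZR. ring. }
  rewrite Hz. pose proof (e_pos c).
  assert (E : x = (x / e c) * e c) by (field; lra).
  rewrite E. set (u := x / e c) in *. clearbody u.
  replace (u * e c - IZR z * e c) with (- ((IZR z - u) * e c)) by ring.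
  rewrite Rabs_Ropp, Rabs_pos_eq by nra. nra.
Qed.

Lemma borel_crit (f : Omega -> R) : (forall a, A (fun w => f w < a)) -> borel_fun A f.
Proof.
  intros H B HB. apply (HB (fun B => A (fun w => B (f w)))).
  - split. apply A_full. intros S HS. apply A_compl, HS. intros S HS. apply A_union, HS.
  - intros U HU.
    set (Q := fun a b c : nat => (INR a - INR b) * e c).
    eapply A_ext.
    apply (A_union (fun a w => exists b c k,
       (forall y, Rabs (y - Q a b c) < e k -> U y) /\ Rabs (f w - Q a b c) < e k)).
    { intros a. apply A_union; intros b. apply A_union; intros c. apply A_union; intros k.
      apply A_and. apply A_const. apply A_ball_lt, H. }
    intros w; split.
    + intros [a [b [c [k [H1 H2]]]]]. auto.
    + intros Hw. destruct (HU _ Hw) as [eps [Heps Hb]].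
      destruct (e_small (eps/2)) as [k Hk]. lra.
      destruct (dyadic_approx (f w) (S k)) as [a [b Hab]].
      exists a, b, (S k), k. fold (Q a b (S k)) in Hab.
      rewrite e_S in Hab. pose proof (e_pos k).
      split.
      * intros y Hy. apply Hb.
        apply Rabs_def2 in Hy. apply Rabs_le_inv in Hab. apply Rabs_def1; lra.
      * apply Rabs_le_inv in Hab. apply Rabs_def1; lra.
Qed.

Lemma borel_lt (f : Omega -> R) a : borel_fun A f -> A (fun w => f w < a).
Proof.
  intros H. apply (H (fun y => y < a)). intros C HC HC2. apply HC2.
  intros x Hx. exists (a - x). split. lra. intros y Hy. apply Rabs_def2 in Hy. lra.
Qed.
End Meas.

Record cst (T : Type) := mkC { cH : T -> Prop; ct : nat -> T -> Prop; cf : nat -> T -> Prop }.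
Arguments mkC {T}. Arguments cH {T}. Arguments ct {T}. Arguments cf {T}.

Section Space.
Context {T : Type} (d : T -> T -> R) (Hm : is_metric d).

Lemma d_refl x : d x x = 0.
Proof. apply (met_zero _ Hm). reflexivity. Qed.
Lemma d_sym x y : d x y = d y x.
Proof. apply (met_sym _ Hm). Qed.
Lemma d_tri x y z : d x z <= d x y + d y z.
Proof. apply (met_tri _ Hm). Qed.
Lemma d_nonneg x y : 0 <= d x y.
Proof. pose proof (d_tri x y x). rewrite d_refl, (d_sym y x) in H. lra. Qed.

Definition good (c : cst T) : Prop :=
  (forall p, ~ cH c p -> exists k dl, 0 < dl /\ forall z, d p z < dl -> cf c k z) /\
  (forall k k' z, (k <= k')%nat -> cf c k z -> cf c k' z) /\
  (forall k z, ct c k z -> ~ cf c k z) /\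
  (forall p z k, cH c p -> 2 * d p z < e k -> ct c k z).

Definition ballC (x : T) (r : R) : cst T :=
  mkC (fun p => d x p <= r) (fun k z => d x z < r + e k) (fun k z => r + e k <= d x z).

Lemma ballC_good x r : good (ballC x r).
Proof.
  repeat split; simpl.
  - intros p Hp. apply Rnot_le_lt in Hp. destruct (e_small ((d x p - r) / 2)) as [k Hk]. lra.
    exists k, (e k). split. apply e_pos. intros z Hz.
    pose proof (d_tri x z p). rewrite (d_sym z p) in H. lra.
  - intros k k' z Hk H. pose proof (e_mono _ _ Hk). lra.
  - intros k z H1 H2. lra.
  - intros p z k H1 H2. pose proof (d_tri x p z). pose proof (d_nonneg p z). lra.
Qed.

Definition FC (S : T -> Prop) (Y : nat -> T) : cst T :=
  mkC S (fun k z => (exists x, S x) /\ exists i, d z (Y i) < e k)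
        (fun k z => forall q, S q -> e k <= d z q).

Lemma FC_good S Y : m_closed d S ->
  ((exists x, S x) -> (forall i, S (Y i)) /\
      (forall x, S x -> m_closure d (fun z => exists n, z = Y n) x)) ->
  good (FC S Y).
Proof.
  intros Hc HY. split; [|split; [|split]]; simpl.
  - intros p Hp. assert (Hn : ~ m_closure d S p) by (intro H; apply Hp, Hc, H).
    unfold m_closure in Hn. apply not_all_ex_not in Hn as [eps Heps].
    apply imply_to_and in Heps as [Heps Hn].
    destruct (e_small (eps / 2)) as [k Hk]. lra.
    exists k, (e k). split. apply e_pos. intros z Hz q Sq.
    assert (eps <= d p q). { apply Rnot_lt_le. intros Hl. apply Hn. exists q. auto. }
    pose proof (d_tri p z q). lra.
  - intros k k' z Hk H q Sq. pose proof (e_mono _ _ Hk). specialize (H q Sq). lra.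
  - intros k z [Hex [i Hi]] H. specialize (H (Y i) (proj1 (HY Hex) i)). lra.
  - intros p z k Sp H. assert (Hex : exists x, S x) by eauto. split. exact Hex.
    destruct (proj2 (HY Hex) p Sp (e k / 2)) as [y [[n ->] Hn]].
    pose proof (e_pos k). lra.
    exists n. pose proof (d_tri z p (Y n)) as Ht. rewrite (d_sym z p) in Ht. lra.
Qed.

Lemma dense_test (Dn : nat -> T)
  (Hd : forall x, m_closure d (fun z => exists n, z = Dn n) x)
  (I : Type) (C : I -> cst T) (HC : forall i, good (C i)) p :
  (forall i, cH (C i) p) -> forall k, exists j, 2 * d p (Dn j) < e k /\ forall i, ct (C i) k (Dn j).
Proof.
  intros Hp k. destruct (Hd p (e k / 2)) as [y [[j ->] Hj]]. pose proof (e_pos k); lra.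
  exists j. split. lra. intros i. destruct (HC i) as [_ [_ [_ H4]]]. apply (H4 p). auto. lra.
Qed.

Lemma ACL (Hp : proper_metric d) (I : Type) (C : I -> cst T) (HC : forall i, good (C i))
  (x0 : T) (R0 : R) :
  (forall k, exists z, d x0 z <= R0 /\ forall i, ct (C i) k z) -> exists p, forall i, cH (C i) p.
Proof.
  intros Hz. apply NNPP. intros Hno.
  set (U := fun (k : nat) p => exists dl, 0 < dl /\ forall z, d p z < dl -> exists i, cf (C i) k z).
  destruct (Hp x0 R0 nat U) as [l Hl].
  - intros k p [dl [Hdl H]]. exists (dl - d p p). rewrite d_refl. split. lra.
    intros y Hy. exists (dl - d p y). split. lra. intros z Hz'. apply H.
    pose proof (d_tri p y z). lra.
  - intros p _. assert (Hi : exists i, ~ cH (C i) p).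
    { apply not_all_not_ex. intros H. apply Hno. exists p. intros i. apply NNPP, H. }
    destruct Hi as [i Hi]. destruct (HC i) as [H1 _].
    destruct (H1 p Hi) as [k [dl [Hdl H]]]. exists k, dl. split. auto. intros z Hz'. eauto.
  - set (K := list_max l). destruct (Hz K) as [z [Hz1 Hz2]].
    destruct (Hl z Hz1) as [k [Hk [dl [Hdl H]]]].
    destruct (H z) as [i Hi]. rewrite d_refl. auto.
    assert (HkK : (k <= K)%nat).
    { unfold K. assert (Hf : Forall (fun k => (k <= list_max l)%nat) l) by (apply list_max_le; lia).
      rewrite Forall_forall in Hf. auto. }
    destruct (HC i) as [_ [H2 [H3 _]]]. apply (H3 K z (Hz2 i)). eapply H2; eauto.
Qed.
End Space.

Lemma least_exists (P : nat -> Prop) : (exists j, P j) -> exists j, P j /\ forall j', (j' < j)%nat -> ~ P j'.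
Proof.
  intros [j Hj]. apply NNPP. intros Hno.
  assert (H : forall n j', (j' <= n)%nat -> ~ P j').
  { induction n as [|n IH]; intros j' Hj' Pj'.
    - apply Hno. exists j'. split. auto. intros j'' Hlt. lia.
    - destruct (Nat.eq_dec j' (S n)) as [->|Hne]. 
      + apply Hno. exists (S n). split. auto. intros j'' Hlt. apply IH. lia.
      + apply (IH j'). lia. auto. }
  apply (H j j); auto.
Qed.

Definition lst (P : nat -> Prop) : nat :=
  match excluded_middle_informative (exists j, P j /\ forall j', (j' < j)%nat -> ~ P j') with
  | left h => proj1_sig (constructive_indefinite_description _ h)
  | right _ => 0%nat end.

Lemma lst_spec P j : lst P = j <-> (P j /\ forall j', (j' < j)%nat -> ~ P j') \/ (j = 0%nat /\ forall j', ~ P j').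
Proof.
  unfold lst. destruct excluded_middle_informative as [h|h].
  - destruct (constructive_indefinite_description _ h) as [j1 [H1 H2]]. simpl. split.
    + intros ->. left. auto.
    + intros [[H3 H4]|[_ H3]].
      * destruct (Nat.lt_trichotomy j1 j) as [Hl|[Hl|Hl]]; auto.
        exfalso; apply (H4 j1); auto. exfalso; apply (H2 j); auto.
      * exfalso; apply (H3 j1); auto.
  - split.
    + intros <-. right. split; auto. intros j' Pj'. apply h, least_exists. eauto.
    + intros [[H3 H4]|[H3 _]]; auto. exfalso. apply h. eauto.
Qed.

Lemma lst_P P : (exists j, P j) -> P (lst P).
Proof.
  intros [j Hj]. destruct (proj1 (lst_spec P (lst P)) eq_refl) as [[H _]|[_ H]]; auto.
  exfalso; apply (H j Hj).
Qed.

Section Fiber.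
Context {Omega : Type} (A : set Omega -> Prop) (X : Omega -> Type)
    (d : forall w, X w -> X w -> R) (L : (forall w, X w) -> Prop)
    (F : nat -> forall w, set (X w))
    (HA : sigma_algebra A) (HB : borel_field A X d L) (Hp : forall w, proper_metric (d w))
    (Y : nat -> nat -> forall w, X w) (HYL : forall n i, L (Y n i))
    (HYd : forall n w, (exists x, F n w x) -> (forall i, F n w (Y n i w)) /\
            (forall x, F n w x -> m_closure (d w) (fun z => exists i, z = Y n i w) x))
    (HFm : forall n, A (fun w => exists x, F n w x))
    (Hcl : forall n w, m_closed (d w) (F n w))
    (Dn : nat -> forall w, X w) (HDL : forall n, L (Dn n))
    (HDd : forall w x, m_closure (d w) (fun z => exists n, z = Dn n w) x).

Let Hm w : is_metric (d w) := bf_metric _ _ _ _ (HB) w.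

Lemma A_lt (x y : forall w, X w) a : L x -> L y -> A (fun w => d w (x w) (y w) < a).
Proof. intros Hx Hy. apply borel_lt. apply (bf_a _ _ _ _ HB); auto. Qed.

Lemma paste (sec : nat -> forall w, X w) (J : Omega -> nat) :
  (forall j, L (sec j)) -> (forall j, A (fun w => J w = j)) -> L (fun w => sec (J w) w).
Proof.
  intros HL HJ. apply (bf_b _ _ _ _ HB). intros x Hx. apply (borel_crit A HA).
  intros a. eapply (A_ext A).
  apply (A_union A HA (fun j w => J w = j /\ d w (x w) (sec j w) < a)).
  intros j. apply (A_and A HA). auto. apply A_lt; auto.
  intros w; split. intros [j [Hj H]]. rewrite Hj. exact H. intros H. exists (J w). auto.
Qed.

Definition Gc w m rho : option nat -> cst (X w) := fun o =>
  match o with None => ballC (d w) (Dn m w) rho | Some n => FC (d w) (F n w) (fun i => Y n i w) end.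

Lemma Gc_good w m rho o : good (d w) (Gc w m rho o).
Proof.
  destruct o as [n|]; simpl. apply FC_good. apply Hm. apply Hcl. apply HYd. apply ballC_good, Hm.
Qed.

Definition Gset w m rho p := forall o, cH (Gc w m rho o) p.

Definition TC w m rho c r : option (option nat) -> cst (X w) := fun o =>
  match o with None => ballC (d w) (Dn c w) r | Some o' => Gc w m rho o' end.

Lemma TC_good w m rho c r o : good (d w) (TC w m rho c r o).
Proof. destruct o; simpl. apply Gc_good. apply ballC_good, Hm. Qed.

Definition Tst w m rho c r := forall k, exists j,
  d w (Dn m w) (Dn j w) < rho + e k /\
  (forall n, (exists x, F n w x) /\ exists i, d w (Dn j w) (Y n i w) < e k) /\
  d w (Dn c w) (Dn j w) < r + e k.

Lemma Tst_iff w m rho c r : Tst w m rho c r <-> exists p, Gset w m rho p /\ d w (Dn c w) p <= r.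
Proof.
  split.
  - intros H. destruct (ACL (d w) (Hm w) (Hp w) _ (TC w m rho c r) (TC_good w m rho c r) (Dn m w) (rho + 1))
      as [p Hp'].
    + intros k. destruct (H k) as [j [H1 [H2 H3]]]. exists (Dn j w). split.
      pose proof (e_le1 k). lra.
      intros [[n|]|]; simpl; auto.
    + exists p. split. intros o. apply (Hp' (Some o)). apply (Hp' None).
  - intros [p [H1 H2]] k.
    destruct (dense_test (d w) (fun n => Dn n w) (HDd w) _ (TC w m rho c r) (TC_good w m rho c r) p)
      with (k := k) as [j [_ Hj]].
    + intros [o|]; simpl. apply H1. exact H2.
    + exists j. split. apply (Hj (Some None)). split. intros n. apply (Hj (Some (Some n))). apply (Hj None).
Qed.

Lemma Tst_meas m rho c r : A (fun w => Tst w m rho c r).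
Proof.
  apply (A_inter A HA). intros k. apply (A_union A HA). intros j.
  apply (A_and A HA). apply A_lt; auto. apply (A_and A HA).
  apply (A_inter A HA). intros n. apply (A_and A HA). auto.
  apply (A_union A HA). intros i. apply A_lt; auto. apply A_lt; auto.
Qed.

Definition Sx w m rho := exists p, Gset w m rho p.

Lemma Sx_iff w m rho : Sx w m rho <-> exists c, Tst w m rho c 1.
Proof.
  split.
  - intros [p Hp']. destruct (HDd w p 1) as [z [[c ->] Hc]]. lra. exists c. apply Tst_iff.
    exists p. split. auto. rewrite (met_sym _ (Hm w)). lra.
  - intros [c Hc]. apply Tst_iff in Hc as [p [H _]]. exists p; auto.
Qed.

Lemma Sx_meas m rho : A (fun w => Sx w m rho).
Proof.
  eapply (A_ext A). apply (A_union A HA). intros c. apply (Tst_meas m rho c 1).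
  intros w. rewrite Sx_iff. tauto.
Qed.


Lemma lst_meas (P : Omega -> nat -> Prop) : (forall j, A (fun w => P w j)) ->
  forall j, A (fun w => lst (P w) = j).
Proof.
  intros HP j. apply (A_ext A (fun w => (P w j /\ forall j', (j' < j)%nat -> ~ P w j') \/ (j = 0%nat /\ forall j', ~ P w j'))).
  2: intros w; symmetry; apply lst_spec.
  apply (A_or A HA). apply (A_and A HA). auto.
  apply (A_inter A HA). intros j'. apply (A_impl A HA). apply (A_const A HA). apply (A_compl A HA), HP.
  apply (A_and A HA). apply (A_const A HA). apply (A_inter A HA). intros j'. apply (A_compl A HA), HP.
Qed.

Definition Qp w m rho j s := Tst w m rho j (e s).

Fixpoint Jseq m rho (s : nat) (w : Omega) : nat :=
  match s with
  | O => lst (fun j => Qp w m rho j 0)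
  | S s' => lst (fun j => Qp w m rho j (S s') /\ d w (Dn (Jseq m rho s' w) w) (Dn j w) < e s' + e (S s'))
  end.

Lemma J_meas m rho s : forall j, A (fun w => Jseq m rho s w = j).
Proof.
  induction s as [|s IH]; simpl.
  - apply lst_meas. intros j. apply Tst_meas.
  - intros j. eapply (A_ext A).
    apply (A_union A HA (fun j0 w => Jseq m rho s w = j0 /\
       lst (fun j => Qp w m rho j (S s) /\ d w (Dn j0 w) (Dn j w) < e s + e (S s)) = j)).
    intros j0. apply (A_and A HA). auto. apply (lst_meas (fun w j => Qp w m rho j (S s) /\ d w (Dn j0 w) (Dn j w) < e s + e (S s))).
    intros j1. apply (A_and A HA). apply Tst_meas. apply A_lt; auto.
    intros w. split. intros [j0 [Hj0 H]]. subst j0. exact H. intros H. exists (Jseq m rho s w). auto.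
Qed.

Lemma Q_next w m rho j0 s : Qp w m rho j0 s ->
  exists j, Qp w m rho j (S s) /\ d w (Dn j0 w) (Dn j w) < e s + e (S s).
Proof.
  unfold Qp. intros H. apply Tst_iff in H as [p [Gp Hp0]].
  destruct (HDd w p (e (S s))) as [z [[j ->] Hj]]. apply e_pos.
  exists j. split. apply Tst_iff. exists p. split. auto. rewrite (met_sym _ (Hm w)). lra.
  pose proof (met_tri _ (Hm w) (Dn j0 w) p (Dn j w)). lra.
Qed.

Lemma J_inv m rho w : Sx w m rho -> forall s, Qp w m rho (Jseq m rho s w) s.
Proof.
  intros HS s. induction s as [|s IH]; simpl.
  - apply lst_P. apply Sx_iff in HS as [c Hc]. exists c. unfold Qp. replace (e 0) with 1 by reflexivity. auto.
  - pose proof (lst_P _ (Q_next w m rho _ s IH)) as H. exact (proj1 H).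
Qed.

Lemma J_step m rho w : Sx w m rho -> forall s,
  d w (Dn (Jseq m rho s w) w) (Dn (Jseq m rho (S s) w) w) < e s + e (S s).
Proof.
  intros HS s. pose proof (lst_P _ (Q_next w m rho _ s (J_inv m rho w HS s))) as H. exact (proj2 H).
Qed.

Lemma J_sum m rho w : Sx w m rho -> forall s N, (s <= N)%nat ->
  d w (Dn (Jseq m rho s w) w) (Dn (Jseq m rho N w) w) <= 3 * (e s - e N).
Proof.
  intros HS s N H. induction H.
  - rewrite (d_refl _ (Hm w)). lra.
  - pose proof (J_step m rho w HS m0). rewrite e_S in *.
    pose proof (met_tri _ (Hm w) (Dn (Jseq m rho s w) w) (Dn (Jseq m rho m0 w) w) (Dn (Jseq m rho (S m0) w) w)).
    lra.
Qed.

Definition LC w m rho : (option nat + nat) -> cst (X w) := fun i =>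
  match i with inl o => Gc w m rho o | inr s => ballC (d w) (Dn (Jseq m rho s w) w) (3 * e s) end.

Lemma limit_exists m rho w : Sx w m rho ->
  exists p, Gset w m rho p /\ forall s, d w (Dn (Jseq m rho s w) w) p <= 3 * e s.
Proof.
  intros HS.
  destruct (ACL (d w) (Hm w) (Hp w) _ (LC w m rho)) with (x0 := Dn (Jseq m rho 0 w) w) (R0 := 3)
    as [p Hp'].
  - intros [o|s]; simpl. apply Gc_good. apply ballC_good, Hm.
  - intros k. destruct (e_small (e k / 4)) as [N HN]. pose proof (e_pos k); lra.
    pose proof (J_inv m rho w HS N) as HQ. unfold Qp in HQ. apply Tst_iff in HQ as [pN [GN HN2]].
    pose proof (e_pos N) as HeN. pose proof (e_pos k) as Hek.
    exists pN. split.
    + pose proof (J_sum m rho w HS 0 N (Nat.le_0_l N)).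
      pose proof (met_tri _ (Hm w) (Dn (Jseq m rho 0 w) w) (Dn (Jseq m rho N w) w) pN).
      replace (e 0) with 1 in * by reflexivity. lra.
    + intros [o|s]; simpl.
      * destruct (Gc_good w m rho o) as [_ [_ [_ H4]]]. apply (H4 pN). apply GN.
        rewrite (d_refl _ (Hm w)). lra.
      * pose proof (met_tri _ (Hm w) (Dn (Jseq m rho s w) w) (Dn (Jseq m rho N w) w) pN).
        pose proof (e_pos s).
        destruct (Compare_dec.le_lt_dec s N) as [Hle|Hlt].
        -- pose proof (J_sum m rho w HS s N Hle). lra.
        -- pose proof (J_sum m rho w HS N s (Nat.lt_le_incl _ _ Hlt)) as Hsum.
           rewrite (met_sym _ (Hm w) (Dn (Jseq m rho N w) w)) in Hsum.
           pose proof (e_mono _ _ (Nat.lt_le_incl _ _ Hlt)). lra.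
  - exists p. split. intros o. apply (Hp' (inl o)). intros s. apply (Hp' (inr s)).
Qed.

Definition sel m rho (fb : forall w, X w) (w : Omega) : X w :=
  match excluded_middle_informative (Sx w m rho) with
  | left _ => epsilon (inhabits (Dn 0%nat w))
      (fun p => Gset w m rho p /\ forall s, d w (Dn (Jseq m rho s w) w) p <= 3 * e s)
  | right _ => fb w end.

Lemma sel_G m rho fb w : Sx w m rho -> Gset w m rho (sel m rho fb w).
Proof.
  intros HS. unfold sel. destruct excluded_middle_informative as [h|h]; [|tauto].
  apply (proj1 (@epsilon_spec _ _ _ (limit_exists m rho w HS))).
Qed.

Lemma sel_fb m rho fb w : ~ Sx w m rho -> sel m rho fb w = fb w.
Proof. intros HS. unfold sel. destruct excluded_middle_informative; tauto. Qed.

Lemma sel_L m rho fb : L fb -> L (sel m rho fb).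
Proof.
  intros Hfb. apply (bf_b _ _ _ _ HB). intros x Hx. apply (borel_crit A HA). intros a.
  eapply (A_ext A).
  - apply (A_or A HA (fun w => Sx w m rho /\ exists s j, Jseq m rho s w = j /\ d w (x w) (Dn j w) < a - 3 * e s)
      (fun w => ~ Sx w m rho /\ d w (x w) (fb w) < a)).
    + apply (A_and A HA). apply Sx_meas. apply (A_union A HA). intros s. apply (A_union A HA). intros j.
      apply (A_and A HA). apply J_meas. apply A_lt; auto.
    + apply (A_and A HA). apply (A_compl A HA), Sx_meas. apply A_lt; auto.
  - intros w. unfold sel. destruct excluded_middle_informative as [h|h].
    + pose proof (@epsilon_spec _ (inhabits (Dn 0%nat w)) _ (limit_exists m rho w h)) as [_ Hb].
      set (p := epsilon _ _) in *. split.
      * intros [[_ [s [j [Hj H]]]]|[H _]]; [|tauto]. subst j.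
        pose proof (met_tri _ (Hm w) (x w) (Dn (Jseq m rho s w) w) p). specialize (Hb s). lra.
      * intros H. left. split. auto. destruct (e_small ((a - d w (x w) p) / 6)) as [s Hs]. lra.
        exists s, (Jseq m rho s w). split. auto.
        pose proof (met_tri _ (Hm w) (x w) p (Dn (Jseq m rho s w) w)). specialize (Hb s).
        rewrite (met_sym _ (Hm w) p) in H0. lra.
    + split. intros [[H _]|[_ H]]; tauto. intros H. right. auto.
Qed.

Lemma final : borel_subfield A X d L (fun w x => forall n, F n w x).
Proof.
  assert (HG : forall w m rho p n, Gset w m rho p -> F n w p).
  { intros w m rho p n H. apply (H (Some n)). }
  assert (HO : forall w, (exists x, forall n, F n w x) <-> exists r, Sx w 0 (INR r)).
  { intros w. split.
    - intros [p Hp']. destruct (INR_unbounded (d w (Dn 0%nat w) p)) as [r Hr]. exists r, p.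
      intros [n|]; simpl. apply Hp'. lra.
    - intros [r [p Hp']]. exists p. intros n. eapply HG; eauto. }
  set (h := fun w => sel 0 (INR (lst (fun r => Sx w 0 (INR r)))) (Dn 0%nat) w).
  assert (Hh : L h).
  { apply (paste (fun r => sel 0 (INR r) (Dn 0%nat)) (fun w => lst (fun r => Sx w 0 (INR r)))).
    intros r. apply sel_L, HDL. apply (lst_meas (fun w r => Sx w 0 (INR r))). intros r. apply Sx_meas. }
  assert (Hh2 : forall w, (exists x, forall n, F n w x) -> forall n, F n w (h w)).
  { intros w Hw n. apply HO in Hw. pose proof (lst_P _ Hw) as H. unfold h.
    eapply HG. apply sel_G. exact H. }
  split.
  - eapply (A_ext A). apply (A_union A HA (fun r w => Sx w 0 (INR r))). intros r. apply Sx_meas.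
    intros w. rewrite HO. tauto.
  - exists (fun n => sel (fst (Cantor.of_nat n)) (e (snd (Cantor.of_nat n))) h).
    split. intros n. apply sel_L, Hh.
    intros w Hw. split.
    + intros n k. destruct (classic (Sx w (fst (Cantor.of_nat n)) (e (snd (Cantor.of_nat n))))) as [HS|HS].
      * eapply HG. apply sel_G. exact HS.
      * rewrite sel_fb by exact HS. apply Hh2; auto.
    + intros x Hx eps Heps. destruct (e_small (eps / 2)) as [r Hr]. lra.
      destruct (HDd w x (e r)) as [z [[m ->] Hm0]]. apply e_pos.
      assert (HS : Sx w m (e r)).
      { exists x. intros [n|]; simpl. apply Hx. rewrite (met_sym _ (Hm w)). lra. }
      pose proof (sel_G m (e r) h w HS (None)) as H. simpl in H.
      exists (sel m (e r) h w). split.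
      * exists (Cantor.to_nat (m, r)). rewrite Cantor.cancel_of_to. reflexivity.
      * pose proof (met_tri _ (Hm w) x (Dn m w) (sel m (e r) h w)). lra.
Qed.

End Fiber.

Theorem mainTheorem7 (Omega : Type) (A : set Omega -> Prop) (X : Omega -> Type)
    (d : forall w, X w -> X w -> R) (L : (forall w, X w) -> Prop)
    (F : nat -> forall w, set (X w)) :
  sigma_algebra A ->
  borel_field A X d L ->
  (forall w, proper_metric (d w)) ->
  (forall n, borel_subfield A X d L (F n)) ->
  (forall n w, m_closed (d w) (F n w)) ->
  borel_subfield A X d L (fun w x => forall n, F n w x).
Proof.
  intros HA HB Hp HF Hcl.
  set (Y := fun n => proj1_sig (constructive_indefinite_description _ (proj2 (HF n)))).
  assert (HYs : forall n, (forall i, L (Y n i)) /\ forall w, (exists x, F n w x) ->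
      (forall i, F n w (Y n i w)) /\
      (forall x, F n w x -> m_closure (d w) (fun z => exists i, z = Y n i w) x)).
  { intros n. unfold Y. destruct (constructive_indefinite_description _ _) as [y Hy]. exact Hy. }
  destruct (bf_c _ _ _ _ HB) as [Dn [HDL HDd]].
  apply (final A X d L F HA HB Hp Y (fun n => proj1 (HYs n)) (fun n => proj2 (HYs n))
           (fun n => proj1 (HF n)) Hcl Dn HDL HDd).
Qed.
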